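(* If $n>k>\ell\geq t+2$, then $r_2(n,k,\ell,t)>r_2(n,\ell,k,t)$, where $r_2(n,k,\ell,t)=S(n-t-1,k-t-1)\big((t+1)S(n-t,\ell-t)-tS(n-t-1,\ell-t-1)\big)$.
   Context: $S(n,k)$ denotes the Stirling number of the second kind, the number of partitions of an $n$-element set into $k$ nonempty blocks. *)

(* Defs.v *)
From mathcomp Require Import all_boot all_order all_algebra.
Set Implicit Arguments. Unset Strict Implicit. Unset Printing Implicit Defensive.
Import GRing.Theory Num.Theory.

Fixpoint stirling2 (n k : nat) : nat :=
  match n, k with
  | 0, 0 => 1
  | 0, _.+1 => 0
  | _.+1, 0 => 0
  | n'.+1, k'.+1 => k'.+1 * stirling2 n' k'.+1 + stirling2 n' k'
  end.

Local Open Scope ring_scope.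

(* r_2(n,k,l,t) = S(n-t-1,k-t-1) ((t+1) S(n-t,l-t) - t S(n-t-1,l-t-1)),
   computed in int (natural-number arguments of S use truncated subtraction,
   harmless under the hypotheses n > k > l >= t+2). *)
Definition r2 (n k l t : nat) : int :=
  (stirling2 (n - t - 1) (k - t - 1))%:Z *
  ((t.+1)%:Z * (stirling2 (n - t) (l - t))%:Z
   - t%:Z * (stirling2 (n - t - 1) (l - t - 1))%:Z).

Lemma stirling2_sanity : [:: stirling2 4 2; stirling2 5 3; stirling2 3 3; stirling2 3 0] = [:: 7; 25; 1; 0]%N.
Proof. by []. Qed.

(* Main.v *)
Require Import Defs.
From mathcomp Require Import all_boot all_order all_algebra.
From mathcomp Require Import zify ring.
Import GRing.Theory Num.Theory.
Definition F N k := (k`! * stirling2 N k)%N.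

Lemma F_succ0 N : F N.+1 0 = 0%N.
Proof. by rewrite /F /= muln0. Qed.

Lemma F_succS N k : F N.+1 k.+1 = (k.+1 * (F N k.+1 + F N k))%N.
Proof. rewrite /F /= factS. ring. Qed.

Lemma F0 k : F 0 k.+1 = 0%N.
Proof. by rewrite /F /= muln0. Qed.

Lemma SS N k : stirling2 N.+1 k.+1 = (k.+1 * stirling2 N k.+1 + stirling2 N k)%N.
Proof. by []. Qed.

Lemma Spos N k : (0 < k <= N)%N -> (0 < stirling2 N k)%N.
Proof.
elim: N k => [|N IH] [|[|k]] // Hk.
- case: N IH Hk => [|N] IH Hk; first by [].
  rewrite (SS N.+1 0). have := IH 1%N. lia.
- rewrite (SS N k.+1). have := IH k.+1. lia.
Qed.

Lemma LC N p d e : (F N p * F N (p+d+e) <= F N (p+d) * F N (p+e))%N.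
Proof.
elim: N p d e => [|N IH] p d e.
  case: d => [|d]; first by rewrite !addn0 mulnC.
  case: e => [|e]; first by rewrite !addn0 mulnC.
  by rewrite !addnS F0 muln0.
case: p => [|q]; first by rewrite F_succ0 mul0n.
case: d => [|d]; first by rewrite !addn0 mulnC.
case: e => [|e]; first by rewrite !addn0 mulnC.
have h1 := IH q.+1 d.+1 e.+1.
have h2 := IH q d.+1 e.+1.
have h3 := IH q d.+2 e.+1.
have h4 := IH q.+1 d e.+1.
rewrite ?addnS ?addSn in h1 h2 h3 h4 *.
rewrite !F_succS.
rewrite mulnACA [X in (_ <= X)%N]mulnACA.
apply: leq_mul; first nia.
nia.
Qed.

Lemma Fpos N k : (0 < k <= N)%N -> (0 < F N k)%N.
Proof. move=> h; rewrite /F muln_gt0 fact_gt0 /=; exact: Spos. Qed.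

Lemma LCs N q e : (q + e.+3 <= N.+1)%N ->
  (F N.+1 q.+1 * F N.+1 (q.+1 + 1 + e.+1) < F N.+1 (q.+1 + 1) * F N.+1 (q.+1 + e.+1))%N.
Proof.
move=> hN.
have h1 := LC N q.+1 1 e.+1.
have h2 := LC N q 1 e.+1.
have h3 := LC N q 2 e.+1.
have h4 := LC N q.+1 0 e.+1.
have p1 := Fpos N q.+1 ltac:(lia).
have p2 := Fpos N (q + e.+2) ltac:(lia).
rewrite ?addnS ?addSn ?addn0 ?addn1 ?addn2 in h1 h2 h3 h4 p2 *.
rewrite !F_succS.
rewrite mulnACA [X in (_ < X)%N]mulnACA.
set R := (_ + _) * (_ + _).
set P := (X in (_ < _ * X)%N).
have hRP : (R <= P)%N by rewrite /R /P; nia.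
have hR : (0 < R)%N by rewrite /R; nia.
have hc : (q.+1 * (q + e).+3 < q.+2 * (q + e).+2)%N by nia.
apply: (@leq_trans (q.+2 * (q + e).+2 * R)); first by rewrite ltn_pmul2r.
by rewrite leq_mul2l hRP orbT.
Qed.

Lemma key b c g :
  ((b.+3 + c) * stirling2 (b+c+g+3) (b+c+3) * stirling2 (b+c+g+3) (b+1)
   < (b+2) * stirling2 (b+c+g+3) (b+2) * stirling2 (b+c+g+3) (b+c+2))%N.
Proof.
have := LCs (b+c+g+2) b c ltac:(lia).
have -> : (b+c+g+2).+1 = (b+c+g+3)%N by lia.
have -> : (b.+1 + 1 + c.+1 = (b+c+2).+1)%N by lia.
have -> : (b.+1 + 1 = b.+2)%N by lia.
have -> : (b.+1 + c.+1 = (b+c).+2)%N by lia.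
rewrite /F [(b.+2)`!]factS [((b+c+2).+1)`!]factS.
have -> : ((b+c+2).+1 = (b+c).+3)%N by lia.
have -> : (b+c+2 = (b+c).+2)%N by lia.
have -> : (b+1 = b.+1)%N by lia.
have -> : (b+2 = b.+2)%N by lia.
have -> : (b+c+3 = (b+c).+3)%N by lia.
have -> : (b.+3 + c = (b+c).+3)%N by lia.
set A := stirling2 _ (b+c).+2.
set C := stirling2 _ b.+1.
set X := stirling2 _ b.+2.
set Y := stirling2 _ (b+c).+3.
set f1 := (b.+1)`!. set f2 := ((b+c).+2)`!.
have hf : (0 < f1 * f2)%N by rewrite !muln_gt0 !fact_gt0.
have E1 : (f1 * C * ((b + c).+3 * f2 * Y) = f1 * f2 * ((b+c).+3 * Y * C))%N by ring.
have E2 : (b.+2 * f1 * X * (f2 * A) = f1 * f2 * (b.+2 * X * A))%N by ring.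
by rewrite E1 E2 ltn_pmul2l.
Qed.

Local Open Scope ring_scope.

Theorem mainTheorem20 (n k l t : nat) :
  (k < n)%N -> (l < k)%N -> (t + 2 <= l)%N ->
  r2 n l k t < r2 n k l t.
Proof.
move=> hkn hlk htl.
have [b Eb] : exists b, l = (t + b + 2)%N by exists (l - t - 2)%N; lia.
subst l.
have [c Ec] : exists c, k = (t + b + 2 + c + 1)%N by exists (k - (t+b+2) - 1)%N; lia.
subst k.
have [g Eg] : exists g, n = (t + b + 2 + c + 1 + g + 1)%N by exists (n - (t+b+2+c+1) - 1)%N; lia.
subst n.
have K := key b c g.
rewrite /r2.
have -> : (t + b + 2 + c + 1 + g + 1 - t - 1 = b + c + g + 3)%N by lia.
have -> : (t + b + 2 + c + 1 - t - 1 = b + c + 2)%N by lia.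
have -> : (t + b + 2 + c + 1 + g + 1 - t = (b + c + g + 3).+1)%N by lia.
have -> : (t + b + 2 - t - 1 = b + 1)%N by lia.
have -> : (t + b + 2 - t = (b + 1).+1)%N by lia.
have -> : (t + b + 2 + c + 1 - t = (b + c + 2).+1)%N by lia.
rewrite !SS.
have -> : ((b+1).+1 = b + 2)%N by lia.
have -> : ((b+c+2).+1 = b + c + 3)%N by lia.
move: K.
set A := stirling2 _ (b+c+2).
set C := stirling2 _ (b+1).
set X := stirling2 _ (b+2).
set Y := stirling2 _ (b+c+3).
move=> K.
have K2 : (((b.+3 + c) * Y * C)%N%:Z < ((b+2) * X * A)%N%:Z) by rewrite ltz_nat.
rewrite !PoszD !PoszM in K2 *.
have -> : (b + c + 3)%N = (b.+3 + c)%N :> int by congr Posz; lia.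
nia.
Qed.
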